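(* The set of regular time warps contains $\mathrm{id}$ and is closed under $\wedge$, $\vee$, $\circ$ and ${}^\star$; that is, it forms a subalgebra $\mathbf{R}$ of the time warp algebra $\mathbf{W}$.
   Context: Let $\omega^+=\omega\cup\{\omega\}$. A time warp is a map $f\colon\omega^+\to\omega^+$ preserving arbitrary joins (equivalently, order-preserving with $f(0)=0$ and $f(\omega)=\bigvee_{n\in\omega}f(n)$). $W$ is the set of time warps, ordered pointwise; $p(m)=\bigvee\{n\in\omega\mid n<m\}$; $f\backslash g$ is the largest time warp $h$ with $f\circ h\le g$. $\mathbf{W}=\langle W,\wedge,\vee,\circ,{}^\star,\mathrm{id}\rangle$ with pointwise meet/join, composition, $f^\star:=f\backslash p$, identity. A time warp $f$ is eventually constant if there is $m\in\omega$ with $f(n)=f(m)$ for all $n\in\omega$, $n\ge m$; eventually linear if there are $m\in\omega$, $k\in\mathbb{Z}$ with $f(n)=n+k$ for all $n\in\omega$, $n\ge m$; regular if it is eventually constant or eventually linear. *)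

(* Defs.v *)
From Stdlib Require Import Arith ZArith.

(* omega^+ = omega ∪ {omega} *)
Inductive wp : Type := Fin (n : nat) | Om.

Definition wle (x y : wp) : Prop :=
  match x, y with
  | Fin m, Fin n => m <= n
  | _, Om => True
  | Om, Fin _ => False
  end.

Definition is_lub (S : wp -> Prop) (x : wp) : Prop :=
  (forall y, S y -> wle y x) /\ (forall z, (forall y, S y -> wle y z) -> wle x z).

Definition img (f : wp -> wp) (S : wp -> Prop) : wp -> Prop :=
  fun y => exists x, S x /\ y = f x.

Definition time_warp (f : wp -> wp) : Prop :=
  forall (S : wp -> Prop) (x : wp), is_lub S x -> is_lub (img f S) (f x).

Definition fle (f g : wp -> wp) : Prop := forall x, wle (f x) (g x).

Definition wmin (x y : wp) : wp :=
  match x, y with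
  | Fin m, Fin n => Fin (Nat.min m n)
  | Om, y => y
  | x, Om => x
  end.
Definition wmax (x y : wp) : wp :=
  match x, y with
  | Fin m, Fin n => Fin (Nat.max m n)
  | _, _ => Om
  end.
Definition tw_meet (f g : wp -> wp) : wp -> wp := fun x => wmin (f x) (g x).
Definition tw_join (f g : wp -> wp) : wp -> wp := fun x => wmax (f x) (g x).
Definition tw_comp (f g : wp -> wp) : wp -> wp := fun x => f (g x).
Definition tw_id : wp -> wp := fun x => x.

(* p(m) = \/ {n in omega | n < m}:  p 0 = 0, p (k+1) = k, p omega = omega *)
Definition pw (x : wp) : wp :=
  match x with
  | Fin 0 => Fin 0
  | Fin (S k) => Fin k
  | Om => Om
  end.

Definition is_residual (f g h : wp -> wp) : Prop :=
  time_warp h /\ fle (tw_comp f h) g /\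
  (forall h', time_warp h' -> fle (tw_comp f h') g -> fle h' h).

Definition is_star (f h : wp -> wp) : Prop := is_residual f pw h.

Definition eventually_constant (f : wp -> wp) : Prop :=
  exists m : nat, forall n : nat, m <= n -> f (Fin n) = f (Fin m).

Definition eventually_linear (f : wp -> wp) : Prop :=
  exists (m : nat) (k : Z), forall n : nat, m <= n ->
    exists j : nat, f (Fin n) = Fin j /\ Z.of_nat j = (Z.of_nat n + k)%Z.

Definition regular (f : wp -> wp) : Prop :=
  eventually_constant f \/ eventually_linear f.

Definition regular_tw (f : wp -> wp) : Prop := time_warp f /\ regular f.

(* Main.v *)
Require Import Defs.
From Stdlib Require Import Arith ZArith Lia Classical IndefiniteDescription.

Lemma wle_refl x : wle x x. Proof. destruct x; simpl; auto. Qed.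
Lemma wle_trans x y z : wle x y -> wle y z -> wle x z.
Proof. destruct x, y, z; simpl; intros; auto; try lia; contradiction. Qed.
Lemma wle_total x y : wle x y \/ wle y x.
Proof. destruct x, y; simpl; auto; lia. Qed.
Lemma wle_antisym x y : wle x y -> wle y x -> x = y.
Proof. destruct x, y; simpl; intros; try (f_equal; lia); tauto. Qed.
Lemma wle_Om x : wle x Om. Proof. destruct x; exact I. Qed.
Lemma wle_Fin0 x : wle (Fin 0) x. Proof. destruct x; simpl; auto; lia. Qed.
Lemma not_wle k y : ~ wle (Fin (S k)) y -> wle y (Fin k).
Proof. destruct y; simpl; intros; [lia| exfalso; apply H; exact I]. Qed.
Lemma wmin_le a b z : wle (wmin a b) z <-> wle a z \/ wle b z.
Proof. destruct a, b, z; simpl; intuition lia. Qed.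
Lemma wmax_le a b z : wle (wmax a b) z <-> wle a z /\ wle b z.
Proof. destruct a, b, z; simpl; intuition lia. Qed.
Lemma wmin_mono a a' b b' : wle a a' -> wle b b' -> wle (wmin a b) (wmin a' b').
Proof. destruct a, a', b, b'; simpl; intuition lia. Qed.
Lemma wmax_mono a a' b b' : wle a a' -> wle b b' -> wle (wmax a b) (wmax a' b').
Proof. destruct a, a', b, b'; simpl; intuition lia. Qed.
Lemma wmin_comm a b : wmin a b = wmin b a.
Proof. destruct a, b; simpl; auto; f_equal; lia. Qed.
Lemma wmax_comm a b : wmax a b = wmax b a.
Proof. destruct a, b; simpl; auto; f_equal; lia. Qed.

Definition TW (f : wp -> wp) : Prop :=
  f (Fin 0) = Fin 0 /\ (forall x y, wle x y -> wle (f x) (f y)) /\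
  (forall z, (forall n, wle (f (Fin n)) z) -> wle (f Om) z).

Lemma tw_TW f : time_warp f -> TW f.
Proof.
  intro H. split; [|split].
  - destruct (H (fun _ => False) (Fin 0)) as [_ H2].
    + split; [intros; contradiction| intros; apply wle_Fin0].
    + specialize (H2 (Fin 0)). destruct (f (Fin 0)) eqn:E; simpl in H2.
      * f_equal. assert (n <= 0); [apply H2|lia]. intros y [x [[] _]].
      * exfalso; apply H2. intros y [x [[] _]].
  - intros x y Hxy. destruct (H (fun z => z = x \/ z = y) y) as [H1 _].
    + split. intros z [->| ->]; auto using wle_refl. intros z Hz; apply Hz; auto.
    + apply H1. exists x; auto.
  - intros z Hz. destruct (H (fun y => exists n, y = Fin n) Om) as [_ H2].
    + split. intros; apply wle_Om. intros w Hw. destruct w; simpl; auto.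
      specialize (Hw (Fin (S n)) (ex_intro _ _ eq_refl)); simpl in Hw; lia.
    + apply H2. intros y [x [[n ->] ->]]. apply Hz.
Qed.

Lemma TW_tw f : TW f -> time_warp f.
Proof.
  intros [H0 [Hm Hs]] P x [Hub Hl]. split.
  - intros y [x0 [Sx0 ->]]. apply Hm, Hub, Sx0.
  - intros z Hz.
    assert (K : forall n, wle (Fin n) x -> wle (f (Fin n)) z).
    { intros n Hn. destruct n as [|k]. rewrite H0; apply wle_Fin0.
      destruct (classic (exists y, P y /\ wle (Fin (S k)) y)) as [[y [Sy Hy]]|Hno].
      - apply wle_trans with (f y). apply Hm, Hy. apply Hz. exists y; auto.
      - exfalso. assert (wle x (Fin k)).
        { apply Hl. intros y Sy. apply not_wle. intro; apply Hno; eauto. }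
        pose proof (wle_trans _ _ _ Hn H). simpl in H1; lia. }
    destruct x. apply K, wle_refl. apply Hs. intro n; apply K, wle_Om.
Qed.

Lemma TW_iff f : time_warp f <-> TW f.
Proof. split; [apply tw_TW|apply TW_tw]. Qed.
Lemma TW_id : TW tw_id.
Proof. unfold TW, tw_id; repeat split; auto. intros z Hz. destruct z; simpl; auto.
  specialize (Hz (S n)); simpl in Hz; lia. Qed.

Lemma TW_meet f g : TW f -> TW g -> TW (tw_meet f g).
Proof.
  intros [f0 [fm fs]] [g0 [gm gs]]. unfold tw_meet. split; [|split].
  - rewrite f0, g0; reflexivity.
  - intros; apply wmin_mono; auto.
  - intros z Hz. apply wmin_le.
    destruct (classic (forall n, wle (f (Fin n)) z)) as [H|H]; [left; auto|right].
    apply not_all_ex_not in H. destruct H as [n0 Hn0].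
    apply gs. intro n. destruct (proj1 (wmin_le _ _ _) (Hz (Nat.max n n0))) as [H|H].
    + exfalso; apply Hn0. eapply wle_trans; [apply fm|apply H]. simpl; lia.
    + eapply wle_trans; [apply gm|apply H]. simpl; lia.
Qed.

Lemma TW_join f g : TW f -> TW g -> TW (tw_join f g).
Proof.
  intros [f0 [fm fs]] [g0 [gm gs]]. unfold tw_join. split; [|split].
  - rewrite f0, g0; reflexivity.
  - intros; apply wmax_mono; auto.
  - intros z Hz. apply wmax_le. split; [apply fs|apply gs]; intro n;
    apply (proj1 (wmax_le _ _ _) (Hz n)).
Qed.

Lemma TW_attained g : TW g -> forall m, wle (Fin m) (g Om) -> exists n, wle (Fin m) (g (Fin n)).
Proof.
  intros [g0 [gm gs]] m Hm. apply NNPP; intro H.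
  destruct m as [|k]. apply H; exists 0; apply wle_Fin0.
  assert (wle (g Om) (Fin k)). { apply gs; intro n; apply not_wle; intro; apply H; eauto. }
  pose proof (wle_trans _ _ _ Hm H0); simpl in *; lia.
Qed.

Lemma TW_comp f g : TW f -> TW g -> TW (tw_comp f g).
Proof.
  intros Hf Hg. pose proof (TW_attained g Hg) as At.
  destruct Hf as [f0 [fm fs]]; destruct Hg as [g0 [gm gs]]. unfold tw_comp. split; [|split].
  - rewrite g0, f0; reflexivity.
  - intros; auto.
  - intros z Hz. destruct (g Om) eqn:E.
    + destruct (At n) as [k Hk]. try rewrite E; apply wle_refl.
      eapply wle_trans; [apply fm, Hk|apply Hz].
    + apply fs. intro m. destruct (At m) as [k Hk]. try rewrite E; exact I.
      eapply wle_trans; [apply fm, Hk|apply Hz].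
Qed.

Lemma regular_ext f g : (forall x, f x = g x) -> regular f -> regular g.
Proof.
  intros E [[m H]|[m [k H]]]; [left|right].
  - exists m; intros; rewrite <- !E; auto.
  - exists m, k; intros n Hn; rewrite <- E; auto.
Qed.

Lemma reg_meet_cl f g m1 m2 k :
  (forall n, m1 <= n -> f (Fin n) = f (Fin m1)) ->
  (forall n, m2 <= n -> exists j, g (Fin n) = Fin j /\ Z.of_nat j = (Z.of_nat n + k)%Z) ->
  regular (tw_meet f g) /\ regular (tw_join f g).
Proof.
  intros Hf Hg. unfold tw_meet, tw_join. destruct (f (Fin m1)) as [c|] eqn:Ev.
  - set (M := m1 + m2 + c + Z.to_nat (- k)).
    assert (K : forall n, M <= n -> exists j, f (Fin n) = Fin c /\ g (Fin n) = Fin j /\ c <= j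
               /\ Z.of_nat j = (Z.of_nat n + k)%Z).
    { intros n Hn. destruct (Hg n) as [j [E1 E2]]. lia. exists j.
      rewrite Hf by lia. repeat split; auto. lia. }
    split.
    + left. exists M. intros n Hn.
      destruct (K n Hn) as [j [-> [-> [Hj _]]]]. destruct (K M (le_n _)) as [j' [-> [-> [Hj' _]]]].
      simpl. f_equal. lia.
    + right. exists M, k. intros n Hn. destruct (K n Hn) as [j [-> [-> [Hj Hz]]]].
      exists j. simpl. split; [f_equal; lia|auto].
  - split.
    + right. exists (m1 + m2), k. intros n Hn. destruct (Hg n) as [j [E1 E2]]. lia.
      exists j. rewrite Hf, E1 by lia. auto.
    + left. exists (m1 + m2). intros n Hn. rewrite !Hf by lia. reflexivity.
Qed.

Lemma reg_meet_join f g : regular f -> regular g -> regular (tw_meet f g) /\ regular (tw_join f g).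
Proof.
  intros [[m1 Hf]|[m1 [k1 Hf]]] [[m2 Hg]|[m2 [k2 Hg]]].
  - split; left; exists (m1 + m2); intros n Hn; unfold tw_meet, tw_join;
      rewrite (Hf n), (Hg n), (Hf (m1+m2)), (Hg (m1+m2)) by lia; reflexivity.
  - apply (reg_meet_cl f g m1 m2 k2); auto.
  - destruct (reg_meet_cl g f m2 m1 k1) as [A B]; auto. split.
    + revert A; apply regular_ext; intro; unfold tw_meet; apply wmin_comm.
    + revert B; apply regular_ext; intro; unfold tw_join; apply wmax_comm.
  - split; right; exists (m1 + m2).
    + exists (Z.min k1 k2). intros n Hn. destruct (Hf n) as [j1 [E1 F1]]. lia.
      destruct (Hg n) as [j2 [E2 F2]]. lia. exists (Nat.min j1 j2). unfold tw_meet.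
      rewrite E1, E2. simpl. split; auto. lia.
    + exists (Z.max k1 k2). intros n Hn. destruct (Hf n) as [j1 [E1 F1]]. lia.
      destruct (Hg n) as [j2 [E2 F2]]. lia. exists (Nat.max j1 j2). unfold tw_join.
      rewrite E1, E2. simpl. split; auto. lia.
Qed.

Lemma reg_comp f g : regular f -> regular g -> regular (tw_comp f g).
Proof.
  unfold tw_comp. intros Rf [[m2 Hg]|[m2 [k2 Hg]]].
  - left. exists m2. intros n Hn. rewrite Hg by auto. reflexivity.
  - destruct Rf as [[m1 Hf]|[m1 [k1 Hf]]].
    + left. exists (m1 + m2 + Z.to_nat (- k2)).
      assert (K : forall n, m1 + m2 + Z.to_nat (- k2) <= n -> f (g (Fin n)) = f (Fin m1)).
      { intros n Hn. destruct (Hg n) as [j [E1 E2]]. lia. rewrite E1. apply Hf. lia. }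
      intros n Hn. rewrite !K by lia. reflexivity.
    + right. exists (m1 + m2 + Z.to_nat (- k2)), (k1 + k2)%Z. intros n Hn.
      destruct (Hg n) as [j [E1 E2]]. lia. rewrite E1.
      destruct (Hf j) as [i [E3 E4]]. lia. exists i. split; auto. lia.
Qed.
Lemma lnp (P : nat -> Prop) n : P n -> exists m, P m /\ forall k, P k -> m <= k.
Proof.
  intro Pn. apply NNPP; intro H. assert (forall k, ~ P k).
  { intro k. induction k as [k IH] using (well_founded_induction lt_wf).
    intro Pk. apply H. exists k; split; auto. intros k' Pk'.
    destruct (le_lt_dec k k'); auto. exfalso; exact (IH k' l Pk'). }
  exact (H0 n Pn).
Qed.

Lemma lub_exists (P : wp -> Prop) : exists x, is_lub P x.
Proof.
  destruct (classic (exists b, forall y, P y -> wle y (Fin b))) as [[b Hb]|Hnb].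
  - destruct (lnp (fun n => forall y, P y -> wle y (Fin n)) b Hb) as [n [Hn Hl]].
    exists (Fin n). split; auto. intros z Hz. destruct z; simpl; auto.
  - exists Om. split. intros; apply wle_Om. intros z Hz. destruct z; simpl; auto.
    apply Hnb; eauto.
Qed.

Lemma boundary (P : nat -> Prop) m : ~ P 0 -> P m -> exists i, ~ P i /\ P (S i).
Proof.
  intros H0 Hm. induction m. contradiction.
  destruct (classic (P m)); auto. eauto.
Qed.

Lemma star_exists f : TW f ->
  exists h, is_star f h /\ (forall j y, wle (f y) (Fin j) -> wle y (h (Fin (S j)))).
Proof.
  intro Hf. pose proof (TW_tw f Hf) as Ht. destruct Hf as [f0 [fm fs]].
  assert (Gex : forall j, exists v, wle (f v) (Fin j) /\ forall y, wle (f y) (Fin j) -> wle y v).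
  { intro j. destruct (lub_exists (fun y => wle (f y) (Fin j))) as [v Hv].
    exists v. split. 
    - destruct (Ht _ _ Hv) as [_ H]. apply H. intros y [x [Hx ->]]; auto.
    - intros; apply Hv; auto. }
  destruct (functional_choice _ Gex) as [G HG].
  set (H := fun n => match n with 0 => Fin 0 | S j => G j end).
  assert (Hmono : forall a b, a <= b -> wle (H a) (H b)).
  { intros [|a] [|b] Hab; simpl; try apply wle_Fin0; try lia.
    apply (proj2 (HG b)). eapply wle_trans. apply (proj1 (HG a)). simpl; lia. }
  destruct (lub_exists (fun y => exists n, y = H n)) as [L [HL1 HL2]].
  set (h := fun x => match x with Fin n => H n | Om => L end).
  assert (Th : TW h).
  { split; [reflexivity|split].
    - intros [a|] [b|]; simpl; intros; auto; try contradiction; try apply wle_refl; apply HL1; eauto.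
    - intros z Hz. apply HL2. intros y [n ->]. apply Hz. }
  exists h. split; [split; [apply TW_tw, Th|split]|].
  - intros [[|j]|]; unfold tw_comp; simpl. rewrite f0; simpl; lia. apply HG. apply wle_Om.
  - intros h' Th' Hle. apply tw_TW in Th'. destruct Th' as [h0 [hm hs]].
    assert (K : forall n, wle (h' (Fin n)) (H n)).
    { intros [|j]. rewrite h0; apply wle_refl. apply (proj2 (HG j)). apply (Hle (Fin (S j))). }
    intros [n|]. apply K. simpl. apply hs. intro n. eapply wle_trans. apply K. apply HL1; eauto.
  - intros j y Hy. simpl. apply HG; auto.
Qed.

Lemma star_regular f h : TW f -> regular f ->
  (forall j, wle (f (h (Fin (S j)))) (Fin j)) ->
  (forall j y, wle (f y) (Fin j) -> wle y (h (Fin (S j)))) -> regular h.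
Proof.
  intros [f0 [fm fs]] [[m Hf]|[m [k Hf]]] HA HB.
  - destruct (f (Fin m)) as [c|] eqn:Ev.
    + assert (Fc : forall y, wle (f y) (Fin c)).
      { assert (wle (f Om) (Fin c)).
        { apply fs. intro n. destruct (Nat.le_ge_cases n m).
          rewrite <- Ev. apply fm; simpl; lia. rewrite Hf by lia. apply wle_refl. }
        intro y. eapply wle_trans; [apply fm, wle_Om|exact H]. }
      assert (K : forall n, S c <= n -> h (Fin n) = Om).
      { intros [|j] Hn. lia. apply wle_antisym. apply wle_Om. apply (HB j).
        eapply wle_trans. apply Fc. simpl; lia. }
      left. exists (S c). intros n Hn. rewrite !K; auto.
    + destruct (boundary (fun i => f (Fin i) = Om) m) as [i [Hi1 Hi2]].
      rewrite f0; discriminate. auto.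
      destruct (f (Fin i)) as [c|] eqn:Ec; [|contradiction].
      assert (K : forall n, S c <= n -> h (Fin n) = Fin i).
      { intros [|j] Hn. lia. apply wle_antisym.
        - apply not_wle. intro Hc. apply fm in Hc. rewrite Hi2 in Hc.
          pose proof (wle_trans _ _ _ Hc (HA j)). exact H.
        - apply HB. rewrite Ec; simpl; lia. }
      left. exists (S c). intros n Hn. rewrite !K; auto.
  - right. exists (S (m + Z.to_nat k)), (-1 - k)%Z. intros [|j] Hn. lia.
    destruct (Hf (Z.to_nat (Z.of_nat j - k))) as [i1 [E1 F1]]. lia.
    destruct (Hf (S (Z.to_nat (Z.of_nat j - k)))) as [i2 [E2 F2]]. lia.
    exists (Z.to_nat (Z.of_nat j - k)). split; [|lia].
    apply wle_antisym.
    + apply not_wle. intro Hc. apply fm in Hc. rewrite E2 in Hc.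
      pose proof (wle_trans _ _ _ Hc (HA j)). simpl in H. lia.
    + apply HB. rewrite E1. simpl. lia.
Qed.

Theorem proposition2p5 :
  regular_tw tw_id /\
  (forall f g, regular_tw f -> regular_tw g ->
     regular_tw (tw_meet f g) /\ regular_tw (tw_join f g) /\
     regular_tw (tw_comp f g)) /\
  (forall f, regular_tw f ->
     (exists h, is_star f h) /\ (forall h, is_star f h -> regular_tw h)).
Proof.
  unfold regular_tw. split; [|split].
  - split. apply TW_tw, TW_id. right. exists 0, 0%Z. intros n _. exists n. split; auto. lia.
  - intros f g [Hf Rf] [Hg Rg]. apply tw_TW in Hf, Hg.
    destruct (reg_meet_join f g Rf Rg). split; [|split]; split; auto.
    apply TW_tw, TW_meet; auto. apply TW_tw, TW_join; auto.
    apply TW_tw, TW_comp; auto. apply reg_comp; auto.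
  - intros f [Hf Rf]. apply tw_TW in Hf. destruct (star_exists f Hf) as [h0 [[Th0 [Hle0 Hmax0]] HB]].
    split. exists h0; exact (conj Th0 (conj Hle0 Hmax0)).
    intros h [Th [Hle Hmax]]. split; auto.
    apply (star_regular f h Hf Rf).
    + intro j. apply (Hle (Fin (S j))).
    + intros j y Hy. eapply wle_trans. apply HB, Hy. apply Hmax; auto.
Qed.
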